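(* Let $G=(V,E)$ be an undirected graph without self-loops, let $\succ$ be a strict total order on $V$, and let $u\ne v$ be vertices with $u$ dominating $v$ and $u\succ v$. Let $\mathcal D$ be a set of constraints of the form $x+\bar y\ge1$ with $x\ne y$, $x$ dominating $y$, $x\succ y$, and ($x=u$ or $x\succ u$), such that $\mathcal D$ contains $x+\bar y\ge1$ for every pair of distinct vertices $(x,y)$ with $x$ dominating $y$, $x\succ y$ and $x\succ u$. Let $\omega$ be the substitution swapping $u$ and $v$ ($u\mapsto v$, $v\mapsto u$, identity elsewhere). Then for every $k\in\mathbb Z\cup\{\infty\}$, $$F_G\cup\mathcal D\cup\{f\le k-1\}\cup\{\neg(u+\bar v\ge1)\}\ \vdash\ (F_G\cup\mathcal D\cup\{u+\bar v\ge1\})|_\omega\cup\{f|_\omega\le f\},$$ i.e. the redundance-based strengthening condition (with the trivial preorder) holds for deriving $u+\bar v\ge1$ from core set $F_G$ and derived set $\mathcal D$.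
   Context: Each vertex $w\in V$ is identified with a Boolean variable ($w=1$ meaning $w$ is in the clique). $F_G$ is the PB formula consisting of $\bar a+\bar b\ge1$ for all distinct non-adjacent $a,b\in V$; the objective is $f=\sum_{w\in V}\bar w$ (to be minimized). $N(w)=\{w':(w,w')\in E\}$; for distinct $a,b$, $a$ dominates $b$ if $N(a)\setminus\{b\}\supseteq N(b)\setminus\{a\}$. A literal is a variable or its negation $\bar x=1-x$; a PB constraint is $\sum_i a_i\ell_i\ge A$ with negation $\sum_i -a_i\ell_i\ge -A+1$. For a substitution $\omega$, $C|_\omega$ replaces each literal by its image ($\omega(\bar x)=\overline{\omega(x)}$), $G|_\omega$ and $f|_\omega$ likewise. $\vdash$ denotes cutting planes derivability (axioms, literal axioms $\ell\ge0$, positive integer linear combinations, division with rounding up), extended so that $H\vdash D$ whenever $0\ge1$ is derivable from $H\cup\{\neg D\}$; $H\vdash S$ for a set means for each member. $f\le\infty-1$ is the trivially true constraint. *)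

(* Defs.v *)
From mathcomp Require Import all_boot all_order all_algebra.
Set Implicit Arguments. Unset Strict Implicit. Unset Printing Implicit Defensive.
Import Order.TTheory GRing.Theory Num.Theory.
Local Open Scope ring_scope.

Section PB.
Variable V : finType.

Inductive lit := Pos of V | Neg of V.

Definition lneg (l : lit) : lit := match l with Pos x => Neg x | Neg x => Pos x end.

(* a PB constraint  sum_i a_i l_i >= A  (literal form, as written) *)
Record pbc := PBC { pb_terms : seq (int * lit); pb_deg : int }.

Definition pbneg (C : pbc) : pbc :=
  PBC [seq (- t.1, t.2) | t <- pb_terms C] (- pb_deg C + 1).

Definition subst := V -> lit.
Definition lsubst (w : subst) (l : lit) : lit :=
  match l with Pos x => w x | Neg x => lneg (w x) end.
Definition tsubst (w : subst) (s : seq (int * lit)) :=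
  [seq (t.1, lsubst w t.2) | t <- s].
Definition pbsubst (w : subst) (C : pbc) : pbc :=
  PBC (tsubst w (pb_terms C)) (pb_deg C).

(* canonical (variable) form: sum_x c_x x >= B, using ~x = 1 - x *)
Definition vform := ({ffun V -> int} * int)%type.

Definition lcoef (x : V) (t : int * lit) : int :=
  match t.2 with Pos y => if y == x then t.1 else 0
               | Neg y => if y == x then - t.1 else 0 end.
Definition lconst (t : int * lit) : int :=
  match t.2 with Pos _ => 0 | Neg _ => t.1 end.

Definition norm (C : pbc) : vform :=
  ([ffun x => \sum_(t <- pb_terms C) lcoef x t],
   pb_deg C - \sum_(t <- pb_terms C) lconst t).

Definition vadd (C1 C2 : vform) : vform :=
  ([ffun x => C1.1 x + C2.1 x], C1.2 + C2.2).
Definition vscale (c : int) (C : vform) : vform :=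
  ([ffun x => c * C.1 x], c * C.2).

(* ceiling of a / d for d > 0 *)
Definition ceilz (a d : int) : int := - ((- a) %/ d)%Z.

(* division by d > 0 with rounding up, applied to the literal-normalized form
   (nonnegative coefficients, each variable once):
   c_x >= 0 gives literal x with coefficient c_x,
   c_x < 0 gives literal ~x with coefficient -c_x (degree shifted by -c_x). *)
Definition vdiv (d : int) (C : vform) : vform :=
  let A := C.2 + \sum_(x : V) (if C.1 x < 0 then - C.1 x else 0) in
  ([ffun x => if C.1 x < 0 then - ceilz (- C.1 x) d else ceilz (C.1 x) d],
   ceilz A d - \sum_(x : V) (if C.1 x < 0 then ceilz (- C.1 x) d else 0)).

Definition lit_axiom (l : lit) : pbc := PBC [:: (1, l)] 0.

Inductive cpder (H : pbc -> Prop) : vform -> Prop :=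
| cp_ax C : H C -> cpder H (norm C)
| cp_lit l : cpder H (norm (lit_axiom l))
| cp_add C1 C2 : cpder H C1 -> cpder H C2 -> cpder H (vadd C1 C2)
| cp_mul c C : 0 < c -> cpder H C -> cpder H (vscale c C)
| cp_div d C : 0 < d -> cpder H C -> cpder H (vdiv d C).

Definition vfalse : vform := ([ffun=> 0], 1).

Definition pbU (H1 H2 : pbc -> Prop) : pbc -> Prop := fun C => H1 C \/ H2 C.
Definition pb1 (D : pbc) : pbc -> Prop := fun C => C = D.
Definition setsubst (w : subst) (S : pbc -> Prop) : pbc -> Prop :=
  fun C => exists C0, S C0 /\ C = pbsubst w C0.

Definition implies (H : pbc -> Prop) (D : pbc) : Prop :=
  cpder H (norm D) \/ cpder (pbU H (pb1 (pbneg D))) vfalse.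
Definition implies_set (H S : pbc -> Prop) : Prop :=
  forall D, S D -> implies H D.

End PB.

Arguments Pos {V}.
Arguments Neg {V}.

Section Clique.
Variable V : finType.
Variable E : rel V.

Definition FG : pbc V -> Prop := fun C =>
  exists a b : V, a != b /\ ~~ E a b /\ C = PBC [:: (1, Neg a); (1, Neg b)] 1.

Definition fobj : seq (int * lit V) := [seq (1, Neg w) | w <- enum V].

(* f <= k - 1, i.e.  sum_w -1 * ~w >= -(k-1); for k = oo the trivial constraint *)
Definition f_le_km1 (k : option int) : pbc V :=
  match k with
  | Some k => PBC [seq (- t.1, t.2) | t <- fobj] (- (k - 1))
  | None => PBC [::] 0
  end.

(* f|_w <= f, i.e.  f - f|_w >= 0 *)
Definition fsubst_le_f (w : subst V) : pbc V :=
  PBC (fobj ++ [seq (- t.1, t.2) | t <- tsubst w fobj]) 0.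

Definition nbhd (w : V) : {set V} := [set w' | E w w'].

Definition dominates (a b : V) : bool := (nbhd b :\ a) \subset (nbhd a :\ b).

Definition domcl (x y : V) : pbc V := PBC [:: (1, Pos x); (1, Neg y)] 1.

Definition swap (u v : V) : subst V :=
  fun x => if x == u then Pos v else if x == v then Pos u else Pos x.

End Clique.

Arguments pb1 {V}.
Arguments pbU {V}.
Arguments setsubst {V}.
Arguments implies_set {V}.
Arguments f_le_km1 {V}.
Arguments fsubst_le_f {V}.
Arguments swap {V}.
Arguments domcl {V}.
Arguments pbneg {V}.

(* Main.v *)
Require Import Defs.
From mathcomp Require Import all_boot all_order all_algebra.
From mathcomp Require Import zify.
Import Order.TTheory GRing.Theory Num.Theory.
Local Open Scope ring_scope.
Set Implicit Arguments. Unset Strict Implicit.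

Lemma cpder_eq (V : finType) (H : pbc V -> Prop) C C' :
  cpder H C -> C = C' -> cpder H C'.
Proof. by move=> h <-. Qed.

Ltac eqcase :=
  repeat (first [ progress (rewrite ?eqxx /=)
    | match goal with |- context [?a == ?b] => is_var a; is_var b; case: (a =P b) => ?; [try subst|] end]);
  try congruence; try lia.

Section Aux.
Variable V : finType.
Variables u v : V.
Hypothesis huv : u <> v.

Definition sw (x : V) : V := if x == u then v else if x == v then u else x.

Lemma swapE x : swap u v x = Pos (sw x).
Proof. by rewrite /swap /sw; case: (x == u) => //; case: (x == v). Qed.

Lemma sw_u : sw u = v. Proof. by rewrite /sw eqxx. Qed.
Lemma sw_v : sw v = u.
Proof. by rewrite /sw eqxx; case: (v =P u) => // e; rewrite e. Qed.
Lemma sw_o x : x <> u -> x <> v -> sw x = x.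
Proof. by rewrite /sw => /eqP/negbTE -> /eqP/negbTE ->. Qed.

Lemma sw_eq w z : (sw w == z) = (w == sw z).
Proof. rewrite /sw; eqcase. Qed.

Lemma sw_inj : injective sw.
Proof. move=> a b; rewrite /sw; eqcase. Qed.

Lemma pbsubst2 c1 l1 c2 l2 d :
  pbsubst (swap u v) (PBC [:: (c1, l1); (c2, l2)] d) =
  PBC [:: (c1, lsubst (swap u v) l1); (c2, lsubst (swap u v) l2)] d.
Proof. by []. Qed.

Lemma lsP x : lsubst (swap u v) (Pos x) = Pos (sw x).
Proof. by rewrite /= swapE. Qed.
Lemma lsN x : lsubst (swap u v) (Neg x) = Neg (sw x).
Proof. by rewrite /= swapE. Qed.

End Aux.

Lemma norm_fsub (V : finType) (u v : V) (huv : u <> v) :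
  norm (fsubst_le_f (swap u v)) = ([ffun=> 0], 0).
Proof.
have hm : [seq (- t.1, t.2) | t <- tsubst (swap u v) (fobj V)] =
          [seq (-1, Neg (sw u v w)) | w <- enum V].
  rewrite /tsubst /fobj -!map_comp; apply: eq_map => w /=.
  by rewrite swapE.
rewrite /norm /fsubst_le_f; rewrite [pb_terms _]/= hm /fobj; congr (_, _).
  apply/ffunP => z; rewrite !ffunE big_cat !big_map -[Finite.enum V]/(index_enum V).
  have e1 : \sum_(j : V) lcoef z (1, Neg j) = -1.
    rewrite (eq_bigr (fun w => if w == z then -1 else 0)); last first.
      by move=> w _; rewrite /lcoef /=.
    by rewrite -big_mkcond /= big_pred1_eq.
  have e2 : \sum_(j : V) lcoef z (-1, Neg (sw u v j)) = 1.
    rewrite (eq_bigr (fun w => if w == sw u v z then 1 else 0)); last first.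
      by move=> w _; rewrite /lcoef /= sw_eq.
    by rewrite -big_mkcond /= big_pred1_eq.
  by rewrite e1 e2; exact: (addNr 1).
have e3 : \sum_(t <- [seq (1, Neg w) | w <- enum V] ++
     [seq (-1, Neg (sw u v w)) | w <- enum V]) lconst t = 0.
  rewrite big_cat !big_map /lconst /= -big_split /= big1 // => w _; exact: (addrN 1).
by rewrite /= e3 subr0.
Qed.

Lemma dom_trans (V : finType) (E : rel V) (Esym : symmetric E) (x u v : V) :
  x <> u -> x <> v -> u <> v ->
  dominates E x u -> dominates E u v -> dominates E x v.
Proof.
move=> hxu hxv huv /subsetP d1 /subsetP d2; apply/subsetP => w.
rewrite !inE => /andP [hwx hvw].
case: (w =P u) => [ew|/eqP hwu].
  subst w; rewrite (introN eqP huv) /=.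
  have : v \in nbhd E u :\ x.
    by rewrite !inE Esym hvw andbT; apply/eqP => e; apply: hxv.
  move/d1; rewrite !inE => /andP [_ Exv].
  have : x \in nbhd E v :\ u by rewrite !inE Esym Exv andbT; apply/eqP.
  by move/d2; rewrite !inE Esym => /andP [_ ->].
have : w \in nbhd E v :\ u by rewrite !inE hwu hvw.
move/d2; rewrite !inE => /andP [hwv huw].
have : w \in nbhd E u :\ x by rewrite !inE hwx huw.
by move/d1; rewrite !inE => /andP [_ ->]; rewrite hwv.
Qed.

Lemma dom_nonadj (V : finType) (E : rel V) (Esym : symmetric E) (u v b : V) :
  dominates E u v -> ~~ E u b -> b <> u -> b <> v -> ~~ E v b.
Proof.
move=> /subsetP d hub hbu hbv; apply/negP => Evb.
have : b \in nbhd E v :\ u by rewrite !inE Evb andbT; apply/eqP.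
by move/d; rewrite !inE (negbTE hub) andbF.
Qed.

Ltac vfeq := rewrite /vadd /norm /=; congr (_, _);
  [ apply/ffunP => z; rewrite !ffunE /= ?big_cons ?big_nil /lcoef /=; eqcase
  | rewrite ?big_cons ?big_nil /lconst /=; lia ].

Theorem mainTheorem12 (V : finType) (E : rel V)
  (Esym : symmetric E) (Eirr : irreflexive E)
  (gt : rel V) (gt_irr : irreflexive gt) (gt_trans : transitive gt)
  (gt_total : forall x y : V, x != y -> gt x y || gt y x)
  (u v : V) (huv : u != v) (hdom : dominates E u v) (hgt : gt u v)
  (D : pbc V -> Prop)
  (hD : forall C, D C -> exists x y : V,
      [/\ C = domcl x y, x != y, dominates E x y, gt x y & (x = u \/ gt x u)])
  (hDall : forall x y : V, x != y -> dominates E x y -> gt x y -> gt x u ->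
      D (domcl x y))
  (k : option int) :
  implies_set
    (pbU (pbU (pbU (FG E) D) (pb1 (f_le_km1 k))) (pb1 (pbneg (domcl u v))))
    (pbU (setsubst (swap u v) (pbU (pbU (FG E) D) (pb1 (domcl u v))))
          (pb1 (fsubst_le_f (swap u v)))).
Proof.
set H := pbU _ _.
have huv' : u <> v by apply/eqP.
have hN : cpder H (norm (pbneg (domcl u v))) by apply: cp_ax; right.
have comb l1 l2 : cpder H (vadd (vadd (norm (pbneg (domcl u v)))
    (norm (lit_axiom l1))) (norm (lit_axiom l2))).
  by apply: cp_add; [apply: cp_add; [exact: hN| exact: cp_lit] | exact: cp_lit].
have hFG C : FG E C -> cpder H (norm C) by move=> h; apply: cp_ax; left; left; left.
have hDD C : D C -> cpder H (norm C) by move=> h; apply: cp_ax; left; left; right.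
move=> Dt [[C0 [hC0 ->]] | ->]; left.
- case: hC0 => [[hF|hDC]|hC0].
  + case: hF => a [b [hab [hE ->]]]; rewrite pbsubst2 !lsN.
    have hab' : sw u v a <> sw u v b by move=> /sw_inj; apply/eqP.
    case: (sw u v a =P u) => [ea|na].
      move: hab'; rewrite ea; move: (sw u v b) => b' hb'.
      apply: cpder_eq (comb (Neg v) (Neg b')) _; vfeq.
    case: (sw u v b =P u) => [eb|nb].
      move: hab'; rewrite eb; move: (sw u v a) => a' ha'.
      apply: cpder_eq (comb (Neg v) (Neg a')) _; vfeq.
    apply: hFG; exists (sw u v a), (sw u v b); split; first by apply/eqP.
    split=> //.
    have hav : a <> v by move=> e; apply: na; rewrite e sw_v.
    have hbv : b <> v by move=> e; apply: nb; rewrite e sw_v.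
    case: (a =P u) => [ea|hau].
      subst a; have hbu : b <> u by move=> e; move: hab; rewrite e eqxx.
      rewrite sw_u sw_o //.
      exact: (dom_nonadj Esym hdom hE hbu hbv).
    case: (b =P u) => [eb|hbu].
      subst b; rewrite sw_u sw_o // Esym.
      by apply: (dom_nonadj Esym hdom _ hau hav); rewrite Esym.
    by rewrite !sw_o.
  + have [x [y [exy hxy hdxy hgxy hx]]] := hD _ hDC.
    move: hDC; rewrite exy /domcl pbsubst2 lsP lsN => hDC.
    case: hx => [exu|hxu].
      subst x; rewrite sw_u.
      have hy : sw u v y <> v.
        by rewrite -{2}(sw_u u v) => /sw_inj e; move/eqP: hxy; rewrite e.
      move: hy; move: (sw u v y) => y' hy'.
      apply: cpder_eq (comb (Pos u) (Neg y')) _; vfeq.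
    have hxu' : x <> u by move=> e; move: hxu; rewrite e gt_irr.
    have hxv : x <> v.
      by move=> e; move: (gt_trans u x v hxu hgt); rewrite e gt_irr.
    rewrite (sw_o hxu' hxv).
    case: (y =P u) => [eyu|hyu].
      subst y; rewrite sw_u; apply: hDD; apply: hDall.
      - by apply/eqP.
      - apply: (dom_trans Esym hxu' hxv huv' hdxy hdom).
      - exact: (gt_trans u x v hgxy hgt).
      - exact: hxu.
    case: (y =P v) => [eyv|hyv].
      subst y; rewrite sw_v.
      apply: cpder_eq (comb (Pos x) (Neg v)) _; vfeq.
    by rewrite (sw_o hyu hyv); apply: hDD.
  + rewrite hC0 /domcl pbsubst2 lsP lsN sw_u sw_v.
    apply: cpder_eq (comb (Pos u) (Neg u)) _; vfeq.
- apply: cpder_eq (comb (Pos u) (Neg v)) _.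
  rewrite norm_fsub //; vfeq.
Qed.
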